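(* Let $L'$ be the first-order language over two binary relation symbols $R$ and $E$. There is a sentence of $L'$ that does not use equality and uses only the three variables $x,y,z$, which is preserved under substructures but is not equivalent to any universal formula of $L'$ using only the variables $x,y,z$ (in particular, not to any such equality-free universal formula).
   Context: ''Uses only the variables $x,y,z$'' means every variable occurring in the formula, free or bound, is one of $x,y,z$ (variables may be requantified). A universal formula is one built from atomic formulas and negations of atomic formulas using only conjunction, disjunction and universal quantification. A sentence is preserved under substructures if whenever it holds in a structure it holds in the induced structure on every nonempty subset of the universe. Equivalence means truth in the same structures. *)

(* Defs.v *)
From Stdlib Require Import Bool.

(* The only variables available: x, y, z.  Hence every formula of type
   [form] "uses only the variables x, y, z" (free or bound). *)
Inductive var : Type := vx | vy | vz.

Definition var_eqb (u v : var) : bool :=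
  match u, v with
  | vx, vx | vy, vy | vz, vz => true
  | _, _ => false
  end.

Inductive form : Type :=
  | FR  (u v : var)
  | FE  (u v : var)
  | FEq (u v : var)
  | FNot (f : form)
  | FAnd (f g : form)
  | FOr  (f g : form)
  | FImp (f g : form)
  | FAll (v : var) (f : form)
  | FEx  (v : var) (f : form).

Fixpoint free (w : var) (f : form) : bool :=
  match f with
  | FR u v | FE u v | FEq u v => var_eqb w u || var_eqb w v
  | FNot g => free w g
  | FAnd g h | FOr g h | FImp g h => free w g || free w h
  | FAll v g | FEx v g => negb (var_eqb w v) && free w g
  end.

Definition sentence (f : form) : Prop := forall w, free w f = false.

Fixpoint eq_free (f : form) : bool :=
  match f with
  | FR _ _ | FE _ _ => true
  | FEq _ _ => false
  | FNot g => eq_free g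
  | FAnd g h | FOr g h | FImp g h => eq_free g && eq_free h
  | FAll _ g | FEx _ g => eq_free g
  end.

Definition atomic (f : form) : Prop :=
  match f with
  | FR _ _ | FE _ _ | FEq _ _ => True
  | _ => False
  end.

Inductive universal : form -> Prop :=
  | univ_atom f : atomic f -> universal f
  | univ_natom f : atomic f -> universal (FNot f)
  | univ_and f g : universal f -> universal g -> universal (FAnd f g)
  | univ_or f g : universal f -> universal g -> universal (FOr f g)
  | univ_all v f : universal f -> universal (FAll v f).

Record Structure : Type := {
  dom : Type;
  dom_inh : inhabited dom;
  relR : dom -> dom -> Prop;
  relE : dom -> dom -> Prop
}.

Definition upd (M : Structure) (a : var -> dom M) (v : var) (d : dom M)
  : var -> dom M := fun w => if var_eqb w v then d else a w.

Fixpoint sat (M : Structure) (a : var -> dom M) (f : form) : Prop :=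
  match f with
  | FR u v => relR M (a u) (a v)
  | FE u v => relE M (a u) (a v)
  | FEq u v => a u = a v
  | FNot g => ~ sat M a g
  | FAnd g h => sat M a g /\ sat M a h
  | FOr g h => sat M a g \/ sat M a h
  | FImp g h => sat M a g -> sat M a h
  | FAll v g => forall d : dom M, sat M (upd M a v d) g
  | FEx v g => exists d : dom M, sat M (upd M a v d) g
  end.

Definition holds (M : Structure) (f : form) : Prop :=
  forall a : var -> dom M, sat M a f.

Definition substr (M : Structure) (S : dom M -> Prop) (x0 : dom M)
  (Hx0 : S x0) : Structure :=
  {| dom := {x : dom M | S x};
     dom_inh := inhabits (exist S x0 Hx0);
     relR := fun p q => relR M (proj1_sig p) (proj1_sig q);
     relE := fun p q => relE M (proj1_sig p) (proj1_sig q) |}.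

Definition preserved_under_substructures (f : form) : Prop :=
  forall (M : Structure) (S : dom M -> Prop) (x0 : dom M) (Hx0 : S x0),
    holds M f -> holds (substr M S x0 Hx0) f.

Definition equivalent (f g : form) : Prop :=
  forall (M : Structure) (a : var -> dom M), sat M a f <-> sat M a g.

(* Main.v *)
Require Import Defs.
From Stdlib Require Import Bool List Arith Lia Classical.
Import ListNotations.

Lemma upd_eq M a v d : upd M a v d v = d.
Proof. unfold upd; destruct v; reflexivity. Qed.
Lemma upd_neq M a v d u : u <> v -> upd M a v d u = a u.
Proof. unfold upd; destruct u, v; simpl; congruence. Qed.

Ltac updsimp := repeat first [rewrite upd_eq in * | rewrite upd_neq in * by congruence].

Definition topF u := FOr (FR u u) (FNot (FR u u)).
Definition ltF p q := FNot (FR q p).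
Fixpoint posF (i : nat) (u v w : var) : form :=
  match i with
  | 0 => FAll v (FR u v)
  | S i => FEx v (FAnd (ltF v u) (FAnd (posF i v u w) (FAll w (FImp (ltF w u) (FR w v)))))
  end.
Fixpoint chF (n : nat) (u v : var) : form :=
  match n with
  | 0 => topF u
  | S n => FEx v (FAnd (ltF v u) (chF n v u))
  end.

Fixpoint posP (M : Structure) (i : nat) (x : dom M) : Prop :=
  match i with
  | 0 => forall y, relR M x y
  | S i => exists y, ~ relR M x y /\ posP M i y /\ (forall w, ~ relR M x w -> relR M w y)
  end.
Fixpoint chainP (M : Structure) (n : nat) (x : dom M) : Prop :=
  match n with
  | 0 => True
  | S n => exists y, ~ relR M x y /\ chainP M n y
  end.

Lemma pos_sem : forall i u v w, u <> v -> v <> w -> u <> w ->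
  forall M a, sat M a (posF i u v w) <-> posP M i (a u).
Proof.
  induction i; intros u v w H1 H2 H3 M a; simpl.
  - split; intros H d; [specialize (H d)|]; updsimp; auto.
  - split.
    + intros [d [Hlt [Hp Hall]]]. updsimp.
      apply IHi in Hp; [|congruence..]. updsimp.
      exists d; split; [exact Hlt|split; [exact Hp|]].
      intros w0 Hw. specialize (Hall w0). updsimp. auto.
    + intros [d [Hlt [Hp Hall]]]. exists d. updsimp.
      split; [exact Hlt|split].
      * apply IHi; [congruence..|]. updsimp. exact Hp.
      * intros e. updsimp. auto.
Qed.

Lemma ch_sem : forall n u v, u <> v -> forall M a,
  sat M a (chF n u v) <-> chainP M n (a u).
Proof.
  induction n; intros u v H M a; simpl.
  - split; auto. intros _. apply classic.
  - split.
    + intros [d [Hlt Hc]]. updsimp. apply IHn in Hc; [|congruence]. updsimp.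
      exists d; auto.
    + intros [d [Hlt Hc]]. exists d. updsimp. split; auto.
      apply IHn; [congruence|]. updsimp. exact Hc.
Qed.

Definition TP (M : Structure) : Prop :=
  (forall x y, relR M x y \/ relR M y x) /\
  (forall x y z, relR M x y -> relR M y z -> relR M x z).

Lemma posA : forall M, TP M -> forall i j x y, posP M i x -> posP M j y -> i <= j -> relR M x y.
Proof.
  intros M [Htot Htr]. induction i; intros j x y Hx Hy Hij.
  - exact (Hx y).
  - destruct j as [|j]; [lia|].
    destruct Hx as [x' [Hx1 [Hx2 Hx3]]]. destruct Hy as [y' [Hy1 [Hy2 Hy3]]].
    destruct (classic (relR M x y)) as [H|H]; auto. exfalso.
    assert (Hyx' : relR M y x') by (apply Hx3; exact H).
    assert (Hx'y' : relR M x' y') by (apply (IHi j); auto; lia).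
    apply Hy1. eauto.
Qed.

Lemma posB : forall M, TP M -> forall i j x y, posP M i x -> posP M j y -> i < j -> ~ relR M y x.
Proof.
  intros M HT i j x y Hx Hy Hij Hyx. destruct j as [|j]; [lia|].
  destruct Hy as [y' [Hy1 [Hy2 Hy3]]].
  assert (relR M x y') by (apply (posA M HT i j); auto; lia).
  destruct HT as [_ Htr]. apply Hy1. eauto.
Qed.

Lemma pos_transport : forall M, TP M -> forall i x x', relR M x x' -> relR M x' x ->
  posP M i x -> posP M i x'.
Proof.
  intros M [Htot Htr] i x x' H1 H2 Hp. destruct i as [|i]; simpl in *.
  - intros y. eauto.
  - destruct Hp as [y [Hy1 [Hy2 Hy3]]]. exists y. split; [|split; auto].
    + intros Hc. apply Hy1. eauto.
    + intros w Hw. apply Hy3. intros Hc. apply Hw. eauto.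
Qed.



Lemma max_exists : forall (P : nat -> Prop) n, 
  forall m j0, n - j0 <= m -> P j0 -> (forall j, P j -> j <= n) ->
  exists j, P j /\ forall k, P k -> k <= j.
Proof.
  intros P n m. induction m; intros j0 Hm Hj0 Hb.
  - exists j0. split; auto. intros k Hk. pose proof (Hb k Hk). pose proof (Hb j0 Hj0). lia.
  - destruct (classic (exists k, P k /\ j0 < k)) as [[k [Hk1 Hk2]]|Hn].
    + apply (IHm k); auto. pose proof (Hb k Hk1). lia.
    + exists j0. split; auto. intros k Hk. destruct (le_lt_dec k j0); auto.
      exfalso; eauto.
Qed.

Lemma pos_uniq : forall M, TP M -> forall i j x, posP M i x -> posP M j x -> i = j.
Proof.
  intros M HT i j x H1 H2. pose proof HT as [Htot _].
  assert (Hr : relR M x x) by (destruct (Htot x x); auto).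
  destruct (Nat.lt_trichotomy i j) as [Hl|[Hl|Hl]]; auto; exfalso.
  - exact (posB M HT i j x x H1 H2 Hl Hr).
  - exact (posB M HT j i x x H2 H1 Hl Hr).
Qed.

Lemma posL2 : forall M, TP M -> forall n x, ~ chainP M (S n) x -> exists i, i <= n /\ posP M i x.
Proof.
  intros M HT. pose proof HT as [Htot Htr]. induction n; intros x Hc.
  - exists 0. split; auto. simpl. intros y. apply NNPP. intros Hn. apply Hc.
    simpl. exists y. auto.
  - destruct (classic (exists y, ~ relR M x y)) as [[y0 Hy0]|Hno].
    + assert (Hb : forall y, ~ relR M x y -> exists j, j <= n /\ posP M j y).
      { intros y Hy. apply IHn. intros Hcy. apply Hc. simpl. exists y. split; auto. }
      destruct (Hb y0 Hy0) as [j0 [Hj0 Hpj0]].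
      destruct (max_exists (fun j => exists y, ~ relR M x y /\ posP M j y) n (n - j0) j0)
        as [j [[y [Hy1 Hy2]] Hmax]].
      * lia.
      * eauto.
      * intros j [y [Hy1 Hy2]]. destruct (Hb y Hy1) as [j' [Hj' Hp']].
        rewrite (pos_uniq M HT j j' y); auto.
      * exists (S j). split.
        -- destruct (Hb y Hy1) as [j' [Hj' Hp']].
           rewrite (pos_uniq M HT j j' y); auto. lia.
        -- simpl. exists y. split; auto. split; auto.
           intros w Hw. destruct (Hb w Hw) as [j' [_ Hp']].
           apply (posA M HT j' j); auto. apply Hmax. eauto.
    + exists 0. split; [lia|]. simpl. intros y. apply NNPP. intros Hn. apply Hno. eauto.
Qed.

Definition pcF (p q : nat) : form :=
  FEx vx (FAnd (posF p vx vy vz) (FEx vy (FAnd (FE vx vy) (posF q vy vx vz)))).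
Definition PC (M : Structure) (p q : nat) : Prop :=
  exists x y, posP M p x /\ relE M x y /\ posP M q y.

Lemma pc_sem M a p q : sat M a (pcF p q) <-> PC M p q.
Proof.
  unfold pcF, PC; simpl. split.
  - intros [d [H1 [e [H2 H3]]]].
    apply pos_sem in H1; [|discriminate..]. apply pos_sem in H3; [|discriminate..].
    updsimp. exists d, e. auto.
  - intros [d [e [H1 [H2 H3]]]]. exists d. split.
    + apply pos_sem; [discriminate..|]. updsimp. auto.
    + exists e. updsimp. split; auto. apply pos_sem; [discriminate..|]. updsimp. auto.
Qed.

Definition quad := (nat * nat * nat * nat)%type.
Definition quadF (t : quad) : form :=
  match t with (p, q, r, s) =>
    FAnd (pcF p q) (FAnd (pcF p r) (FAnd (pcF p s) (FAnd (pcF q r) (FAnd (pcF q s) (pcF r s)))))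
  end.
Definition QP (M : Structure) (t : quad) : Prop :=
  match t with (p, q, r, s) =>
    PC M p q /\ PC M p r /\ PC M p s /\ PC M q r /\ PC M q s /\ PC M r s
  end.
Lemma quad_sem M a t : sat M a (quadF t) <-> QP M t.
Proof.
  destruct t as [[[p q] r] s]; unfold quadF, QP; cbn [sat]. rewrite !pc_sem. tauto.
Qed.

Definition K := 9.
Definition ordb (t : quad) : bool :=
  match t with (p, q, r, s) => (p <? q) && (q <? r) && (r <? s) end.
Definition quads : list quad :=
  filter ordb (flat_map (fun p => flat_map (fun q => flat_map (fun r =>
     map (fun s => (p, q, r, s)) (seq 0 K)) (seq 0 K)) (seq 0 K)) (seq 0 K)).

Lemma quads_in p q r s : In (p, q, r, s) quads <-> p < q /\ q < r /\ r < s /\ s < K.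
Proof.
  unfold quads. rewrite filter_In. split.
  - intros [Hin Ho].
    apply in_flat_map in Hin. destruct Hin as [p' [Hp Hin]].
    apply in_flat_map in Hin. destruct Hin as [q' [Hq Hin]].
    apply in_flat_map in Hin. destruct Hin as [r' [Hr Hs]].
    apply in_map_iff in Hs. destruct Hs as [s' [Heq Hs]]. inversion Heq; subst.
    apply in_seq in Hs.
    simpl in Ho. apply andb_prop in Ho as [Ho H3]. apply andb_prop in Ho as [H1 H2].
    apply Nat.ltb_lt in H1, H2, H3. lia.
  - intros (H1 & H2 & H3 & H4). split.
    + apply in_flat_map. exists p. split; [apply in_seq; lia|].
      apply in_flat_map. exists q. split; [apply in_seq; lia|].
      apply in_flat_map. exists r. split; [apply in_seq; lia|].
      apply in_map_iff. exists s. split; auto. apply in_seq; lia.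
    + simpl. apply Nat.ltb_lt in H1, H2, H3. rewrite H1, H2, H3. reflexivity.
Qed.

Definition botF := FNot (FAll vx (topF vx)).
Definition DF : form := fold_right (fun t acc => FOr (quadF t) acc) botF quads.
Definition DP (M : Structure) : Prop := exists t, In t quads /\ QP M t.

Lemma D_sem M a : sat M a DF <-> DP M.
Proof.
  unfold DF, DP. induction quads as [|t l IH]; simpl.
  - split; [intros H; exfalso; apply H; intros d; apply classic | intros [t [[] _]]].
  - cbn [sat]. rewrite quad_sem, IH. split.
    + intros [H|[t' [H1 H2]]]; eauto.
    + intros [t' [[H1|H1] H2]]; subst; eauto.
Qed.

Definition totF := FAll vx (FAll vy (FOr (FR vx vy) (FR vy vx))).
Definition transF := FAll vx (FAll vy (FAll vz (FImp (FAnd (FR vx vy) (FR vy vz)) (FR vx vz)))).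
Definition boundF := FNot (FEx vx (chF K vx vy)).
Definition ThetaF := FAnd totF (FAnd transF boundF).
Definition phi := FAnd ThetaF (FNot DF).

Definition ThP (M : Structure) : Prop := TP M /\ forall x, ~ chainP M K x.

Lemma Theta_sem M a : sat M a ThetaF <-> ThP M.
Proof.
  unfold ThetaF, ThP, TP, totF, transF, boundF; cbn [sat]. split.
  - intros [H1 [H2 H3]]. split; [split|].
    + intros x y. specialize (H1 x y). updsimp. exact H1.
    + intros x y z Hxy Hyz. specialize (H2 x y z). updsimp. auto.
    + intros x Hc. apply H3. exists x. apply ch_sem; [discriminate|]. updsimp. exact Hc.
  - intros [[H1 H2] H3]. split; [|split].
    + intros x y. updsimp. auto.
    + intros x y z. updsimp. intros [Hxy Hyz]. eauto.
    + intros [x Hc]. apply ch_sem in Hc; [|discriminate]. updsimp. exact (H3 x Hc).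
Qed.

Lemma phi_sem M a : sat M a phi <-> ThP M /\ ~ DP M.
Proof.
  unfold phi; cbn [sat]. rewrite Theta_sem, D_sem. tauto.
Qed.

Lemma chain_sub M S x0 H n (x : dom (substr M S x0 H)) :
  chainP (substr M S x0 H) n x -> chainP M n (proj1_sig x).
Proof.
  revert x; induction n; simpl; auto.
  intros x [y [H1 H2]]. exists (proj1_sig y). split; auto.
Qed.

Lemma ThP_sub M S x0 H : ThP M -> ThP (substr M S x0 H).
Proof.
  intros [[Ht Htr] Hc]. split; [split|].
  - intros x y. apply Ht.
  - intros x y z. apply Htr.
  - intros x Hx. apply (Hc (proj1_sig x)). apply chain_sub in Hx. exact Hx.
Qed.

Lemma DP_sub M S x0 H : ThP M -> DP (substr M S x0 H) -> DP M.
Proof.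
  intros HM HD. pose proof (ThP_sub M S x0 H HM) as HS.
  set (N := substr M S x0 H) in *.
  destruct HM as [TM CM]. destruct HS as [TS CS].
  destruct HD as [[[[p q] r] s] [Hin HQ]].
  apply quads_in in Hin. destruct Hin as (Hpq & Hqr & Hrs & Hs).
  destruct HQ as ([x1 [y1 [Px1 [E1 Qy1]]]] & [x2 [z2 [Px2 [E2 Rz2]]]] & [x3 [w3 [Px3 [E3 Sw3]]]] &
                  [y4 [z4 [Qy4 [E4 Rz4]]]] & [y5 [w5 [Qy5 [E5 Sw5]]]] & [z6 [w6 [Rz6 [E6 Sw6]]]]).
  assert (Hex : forall x : dom N, exists j, j < K /\ posP M j (proj1_sig x)).
  { intros x. destruct (posL2 M TM 8 (proj1_sig x) (CM _)) as [j [Hj Hp]].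
    exists j. split; [unfold K; lia|exact Hp]. }
  assert (Hsame : forall i j (x x' : dom N), posP N i x -> posP N i x' ->
            posP M j (proj1_sig x) -> posP M j (proj1_sig x')).
  { intros i j x x' H1 H2 H3. apply (pos_transport M TM j (proj1_sig x)); auto.
    - exact (posA N TS i i x x' H1 H2 (le_n _)).
    - exact (posA N TS i i x' x H2 H1 (le_n _)). }
  assert (Hord : forall i i' j j' (x x' : dom N), posP N i x -> posP N i' x' -> i < i' ->
            posP M j (proj1_sig x) -> posP M j' (proj1_sig x') -> j < j').
  { intros i i' j j' x x' H1 H2 Hii H3 H4.
    destruct (le_lt_dec j' j) as [Hl|Hl]; auto. exfalso.
    apply (posB N TS i i' x x' H1 H2 Hii).
    exact (posA M TM j' j (proj1_sig x') (proj1_sig x) H4 H3 Hl). }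
  destruct (Hex x1) as [jp [Hjp Pjp]].
  destruct (Hex y1) as [jq [Hjq Pjq]].
  destruct (Hex z2) as [jr [Hjr Pjr]].
  destruct (Hex w3) as [js [Hjs Pjs]].
  exists (jp, jq, jr, js). split.
  - apply quads_in. split; [|split; [|split]].
    + exact (Hord p q jp jq x1 y1 Px1 Qy1 Hpq Pjp Pjq).
    + exact (Hord q r jq jr y1 z2 Qy1 Rz2 Hqr Pjq Pjr).
    + exact (Hord r s jr js z2 w3 Rz2 Sw3 Hrs Pjr Pjs).
    + exact Hjs.
  - simpl. split; [|split; [|split; [|split; [|split]]]].
    + exists (proj1_sig x1), (proj1_sig y1). auto.
    + exists (proj1_sig x2), (proj1_sig z2). split; [exact (Hsame p jp x1 x2 Px1 Px2 Pjp)|auto].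
    + exists (proj1_sig x3), (proj1_sig w3). split; [exact (Hsame p jp x1 x3 Px1 Px3 Pjp)|auto].
    + exists (proj1_sig y4), (proj1_sig z4). split; [exact (Hsame q jq y1 y4 Qy1 Qy4 Pjq)|].
      split; [exact E4|exact (Hsame r jr z2 z4 Rz2 Rz4 Pjr)].
    + exists (proj1_sig y5), (proj1_sig w5). split; [exact (Hsame q jq y1 y5 Qy1 Qy5 Pjq)|].
      split; [exact E5|exact (Hsame s js w3 w5 Sw3 Sw5 Pjs)].
    + exists (proj1_sig z6), (proj1_sig w6). split; [exact (Hsame r jr z2 z6 Rz2 Rz6 Pjr)|].
      split; [exact E6|exact (Hsame s js w3 w6 Sw3 Sw6 Pjs)].
Qed.

Lemma phi_preserved : preserved_under_substructures phi.
Proof.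
  intros M S x0 H HM a.
  destruct (proj1 (phi_sem M (fun w => proj1_sig (a w))) (HM _)) as [HT HD].
  apply phi_sem. split.
  - apply ThP_sub; exact HT.
  - intros HDs. apply HD. exact (DP_sub M S x0 H HT HDs).
Qed.

Fixpoint lall {T} (f : T -> bool) (l : list T) : bool :=
  match l with [] => true | x :: l => if f x then lall f l else false end.
Fixpoint lex {T} (f : T -> bool) (l : list T) : bool :=
  match l with [] => false | x :: l => if f x then true else lex f l end.
Lemma lall_spec {T} (f : T -> bool) l : lall f l = true <-> forall x, In x l -> f x = true.
Proof.
  induction l as [|y l IH]; simpl. - split; auto; intros _ x [].
  - destruct (f y) eqn:E; rewrite ?IH; split; intros H.
    + intros x [<-|Hx]; auto. + auto. + discriminate. + rewrite H in E; auto.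
Qed.
Lemma lex_spec {T} (f : T -> bool) l : lex f l = true <-> exists x, In x l /\ f x = true.
Proof.
  induction l as [|y l IH]; simpl. - split; [discriminate|intros [x [[] _]]].
  - destruct (f y) eqn:E; rewrite ?IH; split; intros H; eauto.
    + destruct H as [x [H1 H2]]; eauto.
    + destruct H as [x [[<-|H1] H2]]; eauto. congruence.
Qed.

Fixpoint evalb (M : Structure) (en : list (dom M)) (rb eb deq : dom M -> dom M -> bool)
  (a : var -> dom M) (f : form) : bool :=
  match f with
  | FR u v => rb (a u) (a v)
  | FE u v => eb (a u) (a v)
  | FEq u v => deq (a u) (a v)
  | FNot g => if evalb M en rb eb deq a g then false else true
  | FAnd g h => if evalb M en rb eb deq a g then evalb M en rb eb deq a h else false
  | FOr g h => if evalb M en rb eb deq a g then true else evalb M en rb eb deq a h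
  | FImp g h => if evalb M en rb eb deq a g then evalb M en rb eb deq a h else true
  | FAll v g => lall (fun d => evalb M en rb eb deq (upd M a v d) g) en
  | FEx v g => lex (fun d => evalb M en rb eb deq (upd M a v d) g) en
  end.

Lemma evalb_sat M en rb eb deq :
  (forall x, In x en) ->
  (forall x y, rb x y = true <-> relR M x y) ->
  (forall x y, eb x y = true <-> relE M x y) ->
  (forall x y, deq x y = true <-> x = y) ->
  forall f a, evalb M en rb eb deq a f = true <-> sat M a f.
Proof.
  intros Hen Hr He Hd. induction f; intros a; simpl; auto.
  - rewrite <- IHf. destruct (evalb M en rb eb deq a f); split; congruence.
  - rewrite <- IHf1, <- IHf2. destruct (evalb M en rb eb deq a f1); intuition congruence.
  - rewrite <- IHf1, <- IHf2. destruct (evalb M en rb eb deq a f1); intuition congruence.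
  - rewrite <- IHf1, <- IHf2. destruct (evalb M en rb eb deq a f1), (evalb M en rb eb deq a f2); simpl; split; auto; try discriminate; intros H; apply H; reflexivity.
  - rewrite lall_spec. split; intros H d; [apply IHf; apply H; auto|]. intros _. apply IHf; auto.
  - rewrite lex_spec. split; [intros [d [_ Hd']]; exists d; apply IHf; auto|].
    intros [d Hd']. exists d. split; auto. apply IHf; auto.
Qed.

Lemma sat_agree : forall f M a a', (forall w, free w f = true -> a w = a' w) ->
  (sat M a f <-> sat M a' f).
Proof.
  induction f; intros M a a' Hag; simpl in *;
    try (rewrite (Hag u) by (rewrite ?orb_true_iff; destruct u; simpl; auto);
         rewrite (Hag v) by (rewrite ?orb_true_iff; destruct v, u; simpl; auto); tauto).
  - rewrite (IHf M a a'); [tauto|auto].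
  - rewrite (IHf1 M a a'), (IHf2 M a a'); [tauto| |]; intros w Hw; apply Hag; rewrite Hw; auto with bool.
  - rewrite (IHf1 M a a'), (IHf2 M a a'); [tauto| |]; intros w Hw; apply Hag; rewrite Hw; auto with bool.
  - rewrite (IHf1 M a a'), (IHf2 M a a'); [tauto| |]; intros w Hw; apply Hag; rewrite Hw; auto with bool.
  - split; intros H d; specialize (H d); revert H; apply IHf; intros w Hw; unfold upd;
      destruct (var_eqb w v) eqn:E; auto; first [apply Hag | symmetry; apply Hag]; rewrite E, Hw; reflexivity.
  - split; intros [d H]; exists d; revert H; apply IHf; intros w Hw; unfold upd;
      destruct (var_eqb w v) eqn:E; auto; first [apply Hag | symmetry; apply Hag]; rewrite E, Hw; reflexivity.
Qed.

Inductive A4 := A0 | A1 | A2 | A3.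
Inductive B9 := B0 | B1 | B2 | B3 | B4 | B5 | B6 | B7 | B8.
Definition iA (x : A4) : nat := match x with A0 => 0 | A1 => 1 | A2 => 2 | A3 => 3 end.
Definition iB (x : B9) : nat := match x with B0 => 0 | B1 => 1 | B2 => 2 | B3 => 3 | B4 => 4
  | B5 => 5 | B6 => 6 | B7 => 7 | B8 => 8 end.
Definition colB (x : B9) : nat := match x with B0 => 0 | B1 => 1 | B2 => 2 | B3 => 0 | B4 => 1
  | B5 => 0 | B6 => 2 | B7 => 0 | B8 => 1 end.
Definition enA := [A0; A1; A2; A3].
Definition enB := [B0; B1; B2; B3; B4; B5; B6; B7; B8].
Definition rA x y := iA x <=? iA y.
Definition eA x y := negb (iA x =? iA y).
Definition dA x y := iA x =? iA y.
Definition rB x y := iB x <=? iB y.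
Definition eB x y := negb (colB x =? colB y).
Definition dB x y := iB x =? iB y.

Definition MA : Structure := {| dom := A4; dom_inh := inhabits A0;
  relR := fun x y => rA x y = true; relE := fun x y => eA x y = true |}.
Definition MB : Structure := {| dom := B9; dom_inh := inhabits B0;
  relR := fun x y => rB x y = true; relE := fun x y => eB x y = true |}.

Lemma enA_full : forall x : dom MA, In x enA.
Proof. destruct x; simpl; tauto. Qed.
Lemma enB_full : forall x : dom MB, In x enB.
Proof. destruct x; simpl; tauto. Qed.
Lemma dA_spec : forall x y : dom MA, dA x y = true <-> x = y.
Proof. destruct x, y; cbv; split; intros; congruence. Qed.
Lemma dB_spec : forall x y : dom MB, dB x y = true <-> x = y.
Proof. destruct x, y; cbv; split; intros; congruence. Qed.

Lemma evalA : forall f a, evalb MA enA rA eA dA a f = true <-> sat MA a f.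
Proof. apply evalb_sat; [exact enA_full|tauto|tauto|exact dA_spec]. Qed.
Lemma evalB : forall f a, evalb MB enB rB eB dB a f = true <-> sat MB a f.
Proof. apply evalb_sat; [exact enB_full|tauto|tauto|exact dB_spec]. Qed.

Lemma phi_sentence : sentence phi.
Proof. intros w; destruct w; vm_compute; reflexivity. Qed.

Lemma A_not_phi : ~ sat MA (fun _ => A0) phi.
Proof. rewrite <- evalA. vm_compute. discriminate. Qed.

Lemma B_phi : forall b, sat MB b phi.
Proof.
  intros b. apply (sat_agree phi MB (fun _ => B0) b).
  - intros w Hw. rewrite phi_sentence in Hw. discriminate.
  - apply evalB. vm_compute. reflexivity.
Qed.

Definition allv := [vx; vy; vz].
Definition sel {T} (x y z : T) (u : var) : T := match u with vx => x | vy => y | vz => z end.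
Definition pairb (x1 x2 : A4) (y1 y2 : B9) : bool :=
  Bool.eqb (rA x1 x2) (rB y1 y2) && Bool.eqb (dA x1 x2) (dB y1 y2) && Bool.eqb (eA x1 x2) (eB y1 y2).
Definition rangeb (x : A4) (y : B9) : bool := (2 * iA x <=? iB y) && (iB y <=? 2 * iA x + 2).
Definition goodb ax ay az bx by' bz : bool :=
  lall (fun u => lall (fun v => pairb (sel ax ay az u) (sel ax ay az v) (sel bx by' bz u) (sel bx by' bz v)) allv) allv
  && lall (fun u => rangeb (sel ax ay az u) (sel bx by' bz u)) allv.
Definition Good (a : var -> A4) (b : var -> B9) : Prop :=
  goodb (a vx) (a vy) (a vz) (b vx) (b vy) (b vz) = true.

Lemma sel_eq {T} (a : var -> T) u : sel (a vx) (a vy) (a vz) u = a u.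
Proof. destruct u; reflexivity. Qed.
Lemma allv_full u : In u allv.
Proof. destruct u; simpl; tauto. Qed.

Lemma good_pair a b u v : Good a b -> pairb (a u) (a v) (b u) (b v) = true.
Proof.
  unfold Good, goodb. intros H. apply andb_prop in H as [H _].
  rewrite lall_spec in H. specialize (H u (allv_full u)).
  rewrite lall_spec in H. specialize (H v (allv_full v)).
  rewrite !sel_eq in H. exact H.
Qed.

Definition forthb : bool :=
  lall (fun ax => lall (fun ay => lall (fun az =>
  lall (fun bx => lall (fun by' => lall (fun bz =>
    if goodb ax ay az bx by' bz then
      lall (fun d => lex (fun d' => goodb d ay az d' by' bz) enB) enA &&
      lall (fun d => lex (fun d' => goodb ax d az bx d' bz) enB) enA &&
      lall (fun d => lex (fun d' => goodb ax ay d bx by' d') enB) enA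
    else true) enB) enB) enB) enA) enA) enA.

Lemma forthb_true : forthb = true.
Proof. vm_compute. reflexivity. Qed.

Lemma good_forth a b v d : Good a b -> exists d', Good (upd MA a v d) (upd MB b v d').
Proof.
  unfold Good. intros H. pose proof forthb_true as F. unfold forthb in F.
  rewrite lall_spec in F. specialize (F (a vx) (enA_full _)).
  rewrite lall_spec in F. specialize (F (a vy) (enA_full _)).
  rewrite lall_spec in F. specialize (F (a vz) (enA_full _)).
  rewrite lall_spec in F. specialize (F (b vx) (enB_full _)).
  rewrite lall_spec in F. specialize (F (b vy) (enB_full _)).
  rewrite lall_spec in F. specialize (F (b vz) (enB_full _)).
  rewrite H in F. apply andb_prop in F as [F F3]. apply andb_prop in F as [F1 F2].
  destruct v.
  - rewrite lall_spec in F1. specialize (F1 d (enA_full _)). apply lex_spec in F1.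
    destruct F1 as [d' [_ Hd]]. exists d'. exact Hd.
  - rewrite lall_spec in F2. specialize (F2 d (enA_full _)). apply lex_spec in F2.
    destruct F2 as [d' [_ Hd]]. exists d'. exact Hd.
  - rewrite lall_spec in F3. specialize (F3 d (enA_full _)). apply lex_spec in F3.
    destruct F3 as [d' [_ Hd]]. exists d'. exact Hd.
Qed.

Lemma atom_transfer a b f : Good a b -> atomic f -> (sat MB b f <-> sat MA a f).
Proof.
  intros H Hat. destruct f; try contradiction; simpl;
  pose proof (good_pair a b u v H) as P; unfold pairb in P;
  apply andb_prop in P as [P P3]; apply andb_prop in P as [P1 P2];
  apply Bool.eqb_prop in P1, P2, P3.
  - rewrite P1. tauto.
  - rewrite P3. tauto.
  - rewrite <- (dA_spec (a u)), <- (dB_spec (b u)).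
    rewrite P2. tauto.
Qed.

Lemma transfer : forall psi, universal psi -> forall a b, Good a b -> sat MB b psi -> sat MA a psi.
Proof.
  intros psi Hu. induction Hu; intros a b HG Hs.
  - apply (atom_transfer a b f HG H). exact Hs.
  - simpl in *. intros Hc. apply Hs. apply (atom_transfer a b f HG H). exact Hc.
  - simpl in *. destruct Hs; split; eauto.
  - simpl in *. destruct Hs; [left|right]; eauto.
  - simpl in *. intros d. destruct (good_forth a b v d HG) as [d' Hd']. eauto.
Qed.

Lemma not_univ : ~ (exists psi, universal psi /\ equivalent phi psi).
Proof.
  intros [psi [Hu Heq]].
  apply A_not_phi. apply Heq.
  apply (transfer psi Hu (fun _ => A0) (fun _ => B0)).
  - vm_compute. reflexivity.
  - apply Heq. apply B_phi.
Qed.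

Theorem mainTheorem8 :
  exists phi : form,
    sentence phi /\ eq_free phi = true /\
    preserved_under_substructures phi /\
    ~ (exists psi : form, universal psi /\ equivalent phi psi).
Proof.
  exists phi. split; [exact phi_sentence|].
  split; [vm_compute; reflexivity|].
  split; [exact phi_preserved|exact not_univ].
Qed.
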